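(* Let $R$ be a commutative Noetherian ring of prime characteristic $p$ and $G$ an $x$-torsion-free left $R[x,f]$-module. Let $\mathfrak{p}$ be a maximal member of $\mathcal{I}(G)\setminus\{R\}$ with respect to inclusion, and let $L=\operatorname{ann}_G(\bigoplus_{n\ge0}\mathfrak{p}x^n)$ be the corresponding special annihilator submodule of $G$ (a minimal non-zero special annihilator submodule). Then $\mathfrak{p}$ is prime, and every non-zero $g\in L$ satisfies $\operatorname{grann}_{R[x,f]}R[x,f]g=\mathfrak{p}R[x,f]$.
   Context: $R[x,f]$ is the Frobenius skew polynomial ring: free left $R$-module on $(x^i)_{i\ge0}$, $xr=r^px$; $\mathfrak{p}R[x,f]=\bigoplus_n\mathfrak{p}x^n$. $x$-torsion-free: $xg=0\Rightarrow g=0$. $\operatorname{ann}_G\mathfrak{B}$ is the set of elements of $G$ killed by $\mathfrak{B}$; special annihilator submodules are of this form for graded two-sided ideals $\mathfrak{B}$. $\operatorname{grann}N$ is the set of $\sum r_ix^i$ with each $r_ix^i$ annihilating $N$. $\mathcal{I}(G)$ is the set of ideals $\mathfrak{b}$ with $\operatorname{grann}N=\bigoplus_n\mathfrak{b}x^n$ for some $R[x,f]$-submodule $N$ of $G$. *)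

(* Defs.v *)
From HB Require Import structures.
From mathcomp Require Import all_boot all_order all_algebra.
Set Implicit Arguments. Unset Strict Implicit. Unset Printing Implicit Defensive.
Import GRing.Theory.
Local Open Scope ring_scope.

Definition is_ideal (R : comNzRingType) (I : R -> Prop) : Prop :=
  [/\ I 0, (forall a b, I a -> I b -> I (a - b)) & (forall r a, I a -> I (r * a))].

Definition same_set (T : Type) (A B : T -> Prop) : Prop := forall t, A t <-> B t.
Definition sub_set (T : Type) (A B : T -> Prop) : Prop := forall t, A t -> B t.

Definition proper_ideal (R : comNzRingType) (I : R -> Prop) : Prop :=
  is_ideal I /\ ~ I 1.

Definition prime_ideal (R : comNzRingType) (I : R -> Prop) : Prop :=
  proper_ideal I /\ (forall a b, I (a * b) -> I a \/ I b).

Definition noetherian (R : comNzRingType) : Prop :=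
  forall I : nat -> R -> Prop,
    (forall n, is_ideal (I n)) ->
    (forall n, sub_set (I n) (I n.+1)) ->
    exists N, forall n, (N <= n)%N -> same_set (I n) (I N).

(* A left R[x,f]-module (f the Frobenius r |-> r^p) is an R-module G
   together with an additive map xm : G -> G (the action of x) with
   x (r g) = r^p (x g), i.e. the relation x r = r^p x of R[x,f]. *)
Definition frob_module (R : comNzRingType) (p : nat) (G : lmodType R)
    (xm : G -> G) : Prop :=
  (forall g h, xm (g + h) = xm g + xm h) /\
  (forall (r : R) g, xm (r *: g) = r ^+ p *: xm g).

(* Elements of R[x,f] are represented by their coefficient sequences
   sum_i s_i x^i, i.e. by s : {poly R} (only as a left R-module; the
   multiplication of R[x,f] is not needed). Action of s on g: *)
Definition skew_act (R : comNzRingType) (G : lmodType R) (xm : G -> G)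
    (s : {poly R}) (g : G) : G :=
  \sum_(i < size s) s`_i *: iter i xm g.

Definition x_torsion_free (R : comNzRingType) (G : lmodType R) (xm : G -> G) :=
  forall g, xm g = 0 -> g = 0.

Definition is_submodule (R : comNzRingType) (G : lmodType R) (xm : G -> G)
    (N : G -> Prop) : Prop :=
  [/\ N 0, (forall g h, N g -> N h -> N (g + h)),
      (forall (r : R) g, N g -> N (r *: g)) & (forall g, N g -> N (xm g))].

(* b R[x,f] = (+)_n b x^n, as a subset of R[x,f]. *)
Definition graded_ext (R : comNzRingType) (b : R -> Prop) : {poly R} -> Prop :=
  fun s => forall i, b s`_i.

Definition grann (R : comNzRingType) (G : lmodType R) (xm : G -> G)
    (N : G -> Prop) : {poly R} -> Prop :=
  fun s => forall i g, N g -> s`_i *: iter i xm g = 0.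

Definition annG (R : comNzRingType) (G : lmodType R) (xm : G -> G)
    (B : {poly R} -> Prop) : G -> Prop :=
  fun g => forall s, B s -> skew_act xm s g = 0.

Definition cyclic_sub (R : comNzRingType) (G : lmodType R) (xm : G -> G)
    (g : G) : G -> Prop :=
  fun h => exists s : {poly R}, h = skew_act xm s g.

Definition IG (R : comNzRingType) (G : lmodType R) (xm : G -> G)
    (b : R -> Prop) : Prop :=
  is_ideal b /\
  exists N : G -> Prop, is_submodule xm N /\ same_set (grann xm N) (graded_ext b).

(* Main.v *)
Require Import Defs.
From mathcomp Require Import all_boot all_order all_algebra.
From Stdlib Require Import Classical.
Set Implicit Arguments. Unset Strict Implicit.
Import GRing.Theory.
Local Open Scope ring_scope.

Definition annR (R : comNzRingType) (G : lmodType R) (N : G -> Prop) : R -> Prop :=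
  fun r => forall h, N h -> r *: h = 0.

Lemma annR_ideal (R : comNzRingType) (G : lmodType R) (N : G -> Prop) : is_ideal (annR N).
Proof.
split.
- by move=> h _; rewrite scale0r.
- by move=> a b Ha Hb h Nh; rewrite scalerBl Ha // Hb // subrr.
- by move=> r a Ha h Nh; rewrite -scalerA Ha // scaler0.
Qed.

Lemma iter_sub (R : comNzRingType) (G : lmodType R) (xm : G -> G) (N : G -> Prop) i h :
  is_submodule xm N -> N h -> N (iter i xm h).
Proof. by case=> _ _ _ Hx Nh; elim: i => //= i IH; apply: Hx. Qed.

Lemma grann_annR (R : comNzRingType) (p : nat) (G : lmodType R) (xm : G -> G) (N : G -> Prop) :
  frob_module p xm -> (0 < p)%N -> x_torsion_free xm -> is_submodule xm N ->
  same_set (grann xm N) (graded_ext (annR N)).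
Proof.
move=> [_ HxZ] p0 Ht HN s; split.
- move=> Hs i h Nh.
  have key : forall j r h, N h -> r *: iter j xm h = 0 -> r *: h = 0.
    elim=> [//|j IH] r h' Nh'.
    rewrite iterSr => /(IH r (xm h')).
    case: HN => _ _ _ Hx.
    move=> /(_ (Hx _ Nh')) E; apply: Ht.
    by rewrite HxZ -(prednK p0) exprS mulrC -scalerA E scaler0.
  exact: (key i _ _ Nh (Hs i h Nh)).
- move=> Hs i h Nh; apply: Hs; exact: iter_sub.
Qed.

Lemma IG_annR (R : comNzRingType) (p : nat) (G : lmodType R) (xm : G -> G) (N : G -> Prop) :
  frob_module p xm -> (0 < p)%N -> x_torsion_free xm -> is_submodule xm N ->
  IG xm (annR N).
Proof.
move=> Hf p0 Ht HN; split; first exact: annR_ideal.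
by exists N; split => //; apply: grann_annR Hf p0 Ht HN.
Qed.

Lemma graded_ext_C (R : comNzRingType) (b c : R -> Prop) :
  b 0 -> c 0 -> same_set (graded_ext b) (graded_ext c) -> same_set b c.
Proof.
move=> b0 c0 E r; split => H.
- have /E /(_ 0%N) : graded_ext b r%:P by move=> i; rewrite coefC; case: eqP.
  by rewrite coefC.
- have /E /(_ 0%N) : graded_ext c r%:P by move=> i; rewrite coefC; case: eqP.
  by rewrite coefC.
Qed.

Lemma skew_act_widen (R : comNzRingType) (G : lmodType R) (xm : G -> G) (s : {poly R}) (g : G) n :
  (size s <= n)%N -> skew_act xm s g = \sum_(i < n) s`_i *: iter i xm g.
Proof.
move=> Hn; rewrite /skew_act (big_ord_widen n (fun i => s`_i *: iter i xm g) Hn).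
rewrite [RHS](bigID (fun i : 'I_n => (i < size s)%N)) /= [X in _ = _ + X]big1 ?addr0 //.
by move=> i; rewrite -leqNgt => Hi; rewrite nth_default // scale0r.
Qed.

Lemma skew_actD (R : comNzRingType) (G : lmodType R) (xm : G -> G) (s t : {poly R}) (g : G) :
  skew_act xm (s + t) g = skew_act xm s g + skew_act xm t g.
Proof.
pose n := maxn (size s) (size t).
rewrite (skew_act_widen _ _ (n:=n)) ?(leq_trans (size_polyD _ _)) //.
rewrite (skew_act_widen _ _ (n:=n)) ?leq_maxl // (skew_act_widen _ _ (n:=n)) ?leq_maxr //.
by rewrite -big_split; apply: eq_bigr => i _; rewrite coefD scalerDl.
Qed.

Lemma skew_actZ (R : comNzRingType) (G : lmodType R) (xm : G -> G) (r : R) (s : {poly R}) (g : G) :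
  skew_act xm (r *: s) g = r *: skew_act xm s g.
Proof.
rewrite (skew_act_widen _ _ (n:=size s)) ?size_scale_leq // /skew_act scaler_sumr.
by apply: eq_bigr => i _; rewrite coefZ scalerA.
Qed.

Lemma xm_sum (R : comNzRingType) (p : nat) (G : lmodType R) (xm : G -> G) n (F : 'I_n -> G) :
  frob_module p xm -> xm (\sum_(i < n) F i) = \sum_(i < n) xm (F i).
Proof.
move=> [HD _].
have x0 : xm 0 = 0.
  have := HD 0 0; rewrite addr0 => /(congr1 (fun z => z - xm 0)).
  by rewrite subrr addrK => <-.
exact: (big_morph xm HD x0).
Qed.

Lemma cyclic_sub_submodule (R : comNzRingType) (p : nat) (G : lmodType R) (xm : G -> G) (g : G) :
  frob_module p xm -> is_submodule xm (cyclic_sub xm g).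
Proof.
move=> Hf; split.
- by exists 0; rewrite /skew_act size_poly0 big_ord0.
- by move=> _ _ [s ->] [t ->]; exists (s + t); rewrite skew_actD.
- by move=> r _ [s ->]; exists (r *: s); rewrite skew_actZ.
- move=> _ [s ->].
  exists (\poly_(i < (size s).+1) (if i == 0%N then 0 else s`_(i.-1) ^+ p)).
  rewrite [RHS](skew_act_widen _ _ (n:=(size s).+1)) ?size_poly //.
  rewrite big_ord_recl coef_poly /= scale0r add0r /skew_act (xm_sum _ Hf).
  apply: eq_bigr => i _; rewrite coef_poly /bump /= ltnS ltn_ord /=.
  by case: Hf => _ ->.
Qed.

Theorem lemma3p8 (R : comNzRingType) (p : nat) (G : lmodType R) (xm : G -> G)
  (P : R -> Prop) :
  noetherian R ->
  prime p -> (p%:R : R) = 0 ->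
  frob_module p xm ->
  x_torsion_free xm ->
  IG xm P -> ~ P 1 ->
  (forall b : R -> Prop, IG xm b -> ~ b 1 -> sub_set P b -> same_set b P) ->
  prime_ideal P /\
  (forall g : G, annG xm (graded_ext P) g -> g <> 0 ->
     same_set (grann xm (cyclic_sub xm g)) (graded_ext P)).
Proof.
move=> _ pp _ Hf Ht [IP [N [HN EN]]] P1 Hmax.
have p0 : (0 < p)%N by apply: prime_gt0.
have [P0 PB PM] := IP.
have EP : same_set P (annR N).
  apply: graded_ext_C => //; first by case: (annR_ideal N).
  move=> s; have := grann_annR Hf p0 Ht HN s; have := EN s; tauto.
split.
  split; first by split.
  move=> a b Hab.
  case: (classic (P a)) => Ha; [by left | right].
  pose M := fun h : G => exists k, N k /\ h = a *: k.
  have HM : is_submodule xm M.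
    case: HN => N0 ND NZ NX; split.
    - by exists 0; rewrite scaler0.
    - by move=> _ _ [k [Nk ->]] [k' [Nk' ->]]; exists (k + k'); rewrite scalerDr; split => //; apply: ND.
    - by move=> r _ [k [Nk ->]]; exists (r *: k); rewrite !scalerA mulrC; split => //; apply: NZ.
    - move=> _ [k [Nk ->]]; exists (a ^+ p.-1 *: xm k); split; first by apply/NZ/NX.
      by case: Hf => _ ->; rewrite scalerA -exprS prednK.
  have E := Hmax _ (IG_annR Hf p0 Ht HM).
  have E1 : ~ annR M 1.
    move=> H1; apply: Ha; apply/EP => k Nk.
    by have := H1 (a *: k); rewrite scale1r; apply; exists k.
  have E2 : sub_set P (annR M).
    move=> r Pr _ [k [Nk ->]]; rewrite scalerA; apply: (proj1 (EP (r * a))) => //.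
    by rewrite mulrC; apply: PM.
  apply: (proj1 (E E1 E2 b)).
  move=> _ [k [Nk ->]]; rewrite scalerA mulrC; exact: (proj1 (EP _) Hab).
move=> g Hg g0.
have HC := cyclic_sub_submodule g Hf.
have E := Hmax _ (IG_annR Hf p0 Ht HC).
have EC : same_set (annR (cyclic_sub xm g)) P.
  apply: E.
  - move=> H1; apply: g0; rewrite -(scale1r g); apply: H1.
    by exists 1; rewrite /skew_act size_poly1 big_ord1 coefC /= scale1r.
  - move=> r Pr _ [s ->]; rewrite -skew_actZ; apply: Hg => i.
    by rewrite coefZ mulrC; apply: PM.
move=> s; have := grann_annR Hf p0 Ht HC s; move=> [H1 H2]; split => H.
  by move=> i; apply/EC; apply: H1.
by apply: H2 => i; apply/EC.
Qed.
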